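(* Let $(\Omega,\mathcal E_\Omega)$ be a finite-dimensional generalized probabilistic theory whose state space $\Omega$ is transitive and whose positive cone $V_+$ is self-dual with respect to $\langle\cdot,\cdot\rangle_{GL(\Omega)}$. Let $F=\{f_a\}_{a\in A}$ and $G=\{g_b\}_{b\in B}$ be ideal observables on $\Omega$ with finite outcome sets $A,B$, and let $\widetilde M^{FG}=\{\widetilde m^{FG}_{ab}\}_{(a,b)\in A\times B}$ be an arbitrary observable on $A\times B$ with marginals $\widetilde M^F=\{\sum_b\widetilde m^{FG}_{ab}\}_a$, $\widetilde M^G=\{\sum_a\widetilde m^{FG}_{ab}\}_b$. Then there exists a state $\omega\in\Omega$ such that $$D_\infty(\widetilde M^F,F)+D_\infty(\widetilde M^G,G)\ge LE(\omega^F)+LE(\omega^G).$$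
   Context: Setting: $V=\mathbb R^{N+1}$ with Euclidean inner product $(\cdot,\cdot)_E$. A state space $\Omega\subset V$ is a compact convex set with $\mathrm{span}(\Omega)=V$ and $0\notin\mathrm{aff}(\Omega)$; $V_+=\{\lambda\omega:\lambda\ge0,\omega\in\Omega\}$; the unit effect $u\in V^*$ satisfies $u(\omega)=1$ on $\Omega$; effects are $\mathcal E_\Omega=\{e\in V^*:0\le e(\omega)\le1\ \forall\omega\in\Omega\}$. An observable with finite outcome set $X$ is a family of effects $\{e_x\}_{x\in X}$ with $\sum_xe_x=u$ (the trivial observable $\{u\}$ is excluded). An effect is pure if it is an extreme point of $\mathcal E_\Omega$; indecomposable if $e\ne0$ and $e=e_1+e_2$ with $e_1,e_2\in\mathcal E_\Omega$ forces $e_1,e_2$ to be scalar multiples of $e$. $F=\{f_a\}$ is ideal if each $f_a$ equals $\sum_{i\in I_a}e_i$ or $u-\sum_{i\in I_a}e_i$ for a finite family of pure indecomposable effects. $GL(\Omega)$: group of linear bijections $T$ of $V$ with $T(\Omega)=\Omega$, $\mu$ its normalized Haar measure, $\langle x,y\rangle_{GL(\Omega)}=\int(Tx,Ty)_E\,d\mu(T)$. $\Omega$ is transitive if $GL(\Omega)$ acts transitively on the extreme points of $\Omega$; $V_+$ is self-dual w.r.t. $\langle\cdot,\cdot\rangle_{GL(\Omega)}$ if $V_+=\{y:\langle x,y\rangle_{GL(\Omega)}\ge0\ \forall x\in V_+\}$. $\omega^F=\{f_a(\omega)\}_a$. Minimum localization error: $LE(\omega^F)=1-\max_{a\in A}f_a(\omega)$.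 $l_\infty$ distance: $D_\infty(\widetilde F,F)=\sup_{\omega\in\Omega}\max_{a\in A}|\widetilde f_a(\omega)-f_a(\omega)|$. *)

(* Defs.v *)
From HB Require Import structures.
From mathcomp Require Import all_boot all_order all_algebra.
From mathcomp Require Import all_classical all_reals all_analysis.
Set Implicit Arguments. Unset Strict Implicit. Unset Printing Implicit Defensive.
Import Order.TTheory GRing.Theory Num.Theory.
Import numFieldNormedType.Exports.
Local Open Scope classical_set_scope.
Local Open Scope ring_scope.

(* V = R^(N+1) is represented by row vectors 'rV[R]_n (n = N.+1).
   Dual vectors (effects) are represented by row vectors too, via the
   Euclidean pairing e(w) = (e, w)_E. *)
Definition dotE (R : realType) (n : nat) (x y : 'rV[R]_n) : R :=
  \sum_(i < n) x 0 i * y 0 i.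

Definition ev (R : realType) (n : nat) (e w : 'rV[R]_n) : R := dotE e w.

Definition convex_set (R : realType) (n : nat) (C : set 'rV[R]_n) : Prop :=
  forall x y t, C x -> C y -> 0 <= t <= 1 -> C (t *: x + (1 - t) *: y).

Definition extreme_point (R : realType) (n : nat) (C : set 'rV[R]_n)
  (x : 'rV[R]_n) : Prop :=
  C x /\ forall y z t, C y -> C z -> 0 < t < 1 ->
    x = t *: y + (1 - t) *: z -> y = x /\ z = x.

Definition spans (R : realType) (n : nat) (C : set 'rV[R]_n) : Prop :=
  forall v : 'rV[R]_n, exists k (p : 'I_k -> 'rV[R]_n) (c : 'I_k -> R),
    (forall i, C (p i)) /\ v = \sum_(i < k) c i *: p i.

Definition in_aff (R : realType) (n : nat) (C : set 'rV[R]_n)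
  (v : 'rV[R]_n) : Prop :=
  exists k (p : 'I_k -> 'rV[R]_n) (c : 'I_k -> R),
    (forall i, C (p i)) /\ \sum_(i < k) c i = 1 /\ v = \sum_(i < k) c i *: p i.

Definition state_space (R : realType) (n : nat) (Om : set 'rV[R]_n) : Prop :=
  compact Om /\ convex_set Om /\ spans Om /\ ~ in_aff Om 0.

Definition unit_effect (R : realType) (n : nat) (Om : set 'rV[R]_n)
  (u : 'rV[R]_n) : Prop := forall w, Om w -> ev u w = 1.

Definition effects (R : realType) (n : nat) (Om : set 'rV[R]_n) : set 'rV[R]_n :=
  [set e | forall w, Om w -> 0 <= ev e w <= 1].

(* observable with finite outcome set X (trivial observable {u}, i.e. a
   single outcome, excluded) *)
Definition observable (R : realType) (n : nat) (Om : set 'rV[R]_n)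
  (u : 'rV[R]_n) (X : finType) (e : X -> 'rV[R]_n) : Prop :=
  (forall x, effects Om (e x)) /\ \sum_(x : X) e x = u /\ (1 < #|X|)%N.

Definition pure_effect (R : realType) (n : nat) (Om : set 'rV[R]_n)
  (e : 'rV[R]_n) : Prop := extreme_point (effects Om) e.

Definition indecomposable (R : realType) (n : nat) (Om : set 'rV[R]_n)
  (e : 'rV[R]_n) : Prop :=
  e <> 0 /\ forall e1 e2, effects Om e1 -> effects Om e2 -> e = e1 + e2 ->
    (exists c : R, e1 = c *: e) /\ (exists c : R, e2 = c *: e).

Definition ideal_observable (R : realType) (n : nat) (Om : set 'rV[R]_n)
  (u : 'rV[R]_n) (X : finType) (f : X -> 'rV[R]_n) : Prop :=
  observable Om u f /\
  forall a, exists k (es : 'I_k -> 'rV[R]_n),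
    (forall i, pure_effect Om (es i) /\ indecomposable Om (es i)) /\
    (f a = \sum_(i < k) es i \/ f a = u - \sum_(i < k) es i).

Definition GLset (R : realType) (n : nat) (Om : set 'rV[R]_n) : set 'M[R]_n :=
  [set T | T \in unitmx /\ (fun w => w *m T) @` Om = Om].

Definition transitive_ss (R : realType) (n : nat) (Om : set 'rV[R]_n) : Prop :=
  forall x y, extreme_point Om x -> extreme_point Om y ->
    exists T, GLset Om T /\ x *m T = y.

Definition Mx (R : realType) (n : nat) := g_sigma_algebraType (@open 'M[R]_n).

(* mu is the normalized Haar measure of GL(Om): a Borel probability measure on
   matrices, carried by GL(Om), and invariant under (left) translations by
   elements of GL(Om).  (Such a measure is unique.) *)
Definition haar_GL (R : realType) (n : nat) (Om : set 'rV[R]_n)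
  (mu : probability (Mx R n) R) : Prop :=
  mu (GLset Om : set (Mx R n)) = 1%E /\
  forall S, GLset Om S -> forall Y : set (Mx R n), measurable Y ->
    mu ((fun T : Mx R n => (S *m T : 'M[R]_n) : Mx R n) @^-1` Y) = mu Y.

Definition ipGL (R : realType) (n : nat) (mu : probability (Mx R n) R)
  (x y : 'rV[R]_n) : R :=
  Rintegral mu setT (fun T : Mx R n => dotE (x *m (T : 'M[R]_n)) (y *m (T : 'M[R]_n))).

Definition pos_cone (R : realType) (n : nat) (Om : set 'rV[R]_n) : set 'rV[R]_n :=
  [set v | exists (l : R) w, 0 <= l /\ Om w /\ v = l *: w].

Definition self_dual (R : realType) (n : nat) (Om : set 'rV[R]_n)
  (mu : probability (Mx R n) R) : Prop :=
  pos_cone Om = [set y | forall x, pos_cone Om x -> 0 <= ipGL mu x y].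

Definition LE (R : realType) (n : nat) (X : finType) (f : X -> 'rV[R]_n)
  (w : 'rV[R]_n) : R :=
  1 - \big[Num.max/0]_(a : X) ev (f a) w.

Definition Dinf (R : realType) (n : nat) (Om : set 'rV[R]_n) (X : finType)
  (ft f : X -> 'rV[R]_n) : R :=
  sup [set r | exists w, Om w /\ r = \big[Num.max/0]_(a : X) `|ev (ft a) w - ev (f a) w|].

Definition marginal1 (R : realType) (n : nat) (A B : finType)
  (m : (A * B)%type -> 'rV[R]_n) : A -> 'rV[R]_n :=
  fun a => \sum_(b : B) m (a, b).
Definition marginal2 (R : realType) (n : nat) (A B : finType)
  (m : (A * B)%type -> 'rV[R]_n) : B -> 'rV[R]_n :=
  fun b => \sum_(a : A) m (a, b).

(* Main.v *)
Require Import Defs.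
From HB Require Import structures.
From mathcomp Require Import all_boot all_order all_algebra.
From mathcomp Require Import all_classical all_reals all_analysis.
From mathcomp Require Import ring lra.
From mathcomp Require Import measurable_realfun.
Import Order.TTheory GRing.Theory Num.Theory.
Import numFieldNormedType.Exports.
Local Open Scope classical_set_scope.
Local Open Scope ring_scope.
Set Implicit Arguments. Unset Strict Implicit. Unset Printing Implicit Defensive.

Section Basic.
Variables (R : realType) (n : nat).
Implicit Types (e w x y : 'rV[R]_n).

Lemma evE e w : ev e w = (e *m w^T) 0 0.
Proof. by rewrite /ev /dotE mxE; apply: eq_bigr => i _; rewrite mxE. Qed.

Lemma evDl e1 e2 w : ev (e1 + e2) w = ev e1 w + ev e2 w.
Proof. by rewrite !evE mulmxDl mxE. Qed.
Lemma evDr e w1 w2 : ev e (w1 + w2) = ev e w1 + ev e w2.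
Proof. by rewrite !evE linearD /= mulmxDr mxE. Qed.
Lemma evZl c e w : ev (c *: e) w = c * ev e w.
Proof. by rewrite !evE -scalemxAl mxE. Qed.
Lemma evZr c e w : ev e (c *: w) = c * ev e w.
Proof. by rewrite !evE linearZ /= -scalemxAr mxE. Qed.
Lemma evNl e w : ev (- e) w = - ev e w.
Proof. by rewrite -scaleN1r evZl mulN1r. Qed.
Lemma evBl e1 e2 w : ev (e1 - e2) w = ev e1 w - ev e2 w.
Proof. by rewrite evDl evNl. Qed.
Lemma evNr e w : ev e (- w) = - ev e w.
Proof. by rewrite -scaleN1r evZr mulN1r. Qed.
Lemma evBr e w1 w2 : ev e (w1 - w2) = ev e w1 - ev e w2.
Proof. by rewrite evDr evNr. Qed.
Lemma ev0l w : ev 0 w = 0.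
Proof. by rewrite evE mul0mx mxE. Qed.
Lemma ev0r e : ev e 0 = 0.
Proof. by rewrite evE linear0 mulmx0 mxE. Qed.
Lemma ev_suml (I : finType) (f : I -> 'rV[R]_n) w :
  ev (\sum_i f i) w = \sum_i ev (f i) w.
Proof.
by rewrite evE mulmx_suml summxE; apply: eq_bigr => i _; rewrite evE.
Qed.
Lemma ev_sumr (I : finType) e (f : I -> 'rV[R]_n) :
  ev e (\sum_i f i) = \sum_i ev e (f i).
Proof.
rewrite evE linear_sum /= mulmx_sumr summxE; apply: eq_bigr => i _.
by rewrite evE.
Qed.
End Basic.

Definition Bf (R : realType) (n : nat) (Q : 'M[R]_n) (x y : 'rV[R]_n) : R :=
  (x *m Q *m y^T) 0 0.

Section Alg.
Variables (R : realType) (n : nat) (Om : set 'rV[R]_n) (u : 'rV[R]_n)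
  (Q : 'M[R]_n).
Hypothesis hQs : Q^T = Q.
Hypothesis hpsd : forall x, 0 <= Bf Q x x.
Hypothesis hsd : pos_cone Om = [set y | forall x, pos_cone Om x -> 0 <= Bf Q x y].
Hypothesis hunit : unit_effect Om u.

Local Notation B := (Bf Q).

Lemma BfE x y : B x y = ev (x *m Q) y.
Proof. by rewrite evE. Qed.

Lemma Bf_sym x y : B x y = B y x.
Proof.
have h : forall M : 'M[R]_1, M 0 0 = M^T 0 0 by move=> M; rewrite mxE.
by rewrite /Bf h !trmx_mul trmxK hQs mulmxA.
Qed.

Lemma BfDr x y z : B x (y + z) = B x y + B x z.
Proof. by rewrite !BfE evDr. Qed.
Lemma BfZr x c y : B x (c *: y) = c * B x y.
Proof. by rewrite !BfE evZr. Qed.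
Lemma BfDl x y z : B (y + z) x = B y x + B z x.
Proof. by rewrite !(Bf_sym _ x) BfDr. Qed.
Lemma BfZl x c y : B (c *: y) x = c * B y x.
Proof. by rewrite !(Bf_sym _ x) BfZr. Qed.
Lemma BfNr x y : B x (- y) = - B x y.
Proof. by rewrite -scaleN1r BfZr mulN1r. Qed.
Lemma BfNl x y : B (- y) x = - B y x.
Proof. by rewrite -scaleN1r BfZl mulN1r. Qed.

Lemma Bf_comb a b y z :
  B (a *: y + b *: z) (a *: y + b *: z) =
  a ^+ 2 * B y y + 2 * a * b * B y z + b ^+ 2 * B z z.
Proof.
rewrite !(BfDl, BfDr, BfZl, BfZr) (Bf_sym z y). 
rewrite !expr2; ring.
Qed.

Lemma pc_dec y : pos_cone Om y -> exists l w, 0 <= l /\ Om w /\ y = l *: w.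
Proof. by []. Qed.

Lemma Om_pc w : Om w -> pos_cone Om w.
Proof. by move=> hw; exists 1, w; rewrite scale1r ler01. Qed.

Lemma ev_u_pc l w : Om w -> ev u (l *: w) = l.
Proof. by move=> hw; rewrite evZr hunit // mulr1. Qed.

Lemma pc_ge0 e y : (forall w, Om w -> 0 <= ev e w) -> pos_cone Om y ->
  0 <= ev e y.
Proof.
by move=> he [l [w [l0 [hw ->]]]]; rewrite evZr mulr_ge0 // he.
Qed.

Lemma pc_le e f y : (forall w, Om w -> ev e w <= ev f w) -> pos_cone Om y ->
  ev e y <= ev f y.
Proof.
move=> he hy; rewrite -subr_ge0 -evBl; apply: pc_ge0 hy => w hw.
by rewrite evBl subr_ge0 he.
Qed.

Lemma pc_B x y : pos_cone Om x -> pos_cone Om y -> 0 <= B x y.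
Proof. by move=> hx; rewrite hsd => /(_ x hx). Qed.

Lemma nondeg z : (forall x, B x z = 0) -> z = 0.
Proof.
move=> hz.
have h1 : pos_cone Om z by rewrite hsd => x _; rewrite hz.
have h2 : pos_cone Om (- z) by rewrite hsd => x _; rewrite BfNr hz oppr0.
move: h1 h2 => [l [w [l0 [hw ->]]]] [l' [w' [l0' [hw' e]]]].
have : ev u (- (l *: w)) = ev u (l' *: w') by rewrite e.
rewrite evNr !ev_u_pc // => hl.
have -> : l = 0 by apply/eqP; rewrite eq_le l0 andbT -oppr_ge0 hl.
by rewrite scale0r.
Qed.

Lemma Qunit : Q \in unitmx.
Proof.
rewrite -row_free_unit; apply: inj_row_free => v hv.
apply: nondeg => x; rewrite Bf_sym /Bf hv mul0mx mxE //.
Qed.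

Definition rep (e : 'rV[R]_n) := e *m invmx Q.

Lemma Bf_rep e w : B (rep e) w = ev e w.
Proof. by rewrite BfE /rep mulmxKV // Qunit. Qed.

Lemma rep_pc e : (forall w, Om w -> 0 <= ev e w) -> pos_cone Om (rep e).
Proof.
move=> he; rewrite hsd => x hx; rewrite Bf_sym Bf_rep; exact: pc_ge0.
Qed.

Lemma ev_rep_sym a b : ev a (rep b) = ev b (rep a).
Proof. by rewrite -Bf_rep Bf_sym Bf_rep. Qed.

Lemma repD a b : rep (a + b) = rep a + rep b.
Proof. by rewrite /rep mulmxDl. Qed.
Lemma repB a b : rep (a - b) = rep a - rep b.
Proof. by rewrite /rep mulmxBl. Qed.
Lemma repZ c a : rep (c *: a) = c *: rep a.
Proof. by rewrite /rep scalemxAl. Qed.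
Lemma rep_sum (I : finType) (f : I -> 'rV[R]_n) : rep (\sum_i f i) = \sum_i rep (f i).
Proof. by rewrite /rep mulmx_suml. Qed.
Lemma rep_eq0 e : rep e = 0 -> e = 0.
Proof. by move=> h; rewrite -(mulmxKV Qunit e); rewrite /rep in h; rewrite h mul0mx. Qed.
Lemma repK e : rep e *m Q = e.
Proof. by rewrite /rep mulmxKV // Qunit. Qed.

Lemma definite x : B x x = 0 -> x = 0.
Proof.
move=> hx; apply: nondeg => y; rewrite Bf_sym.
set b := B x y; set c := B y y.
have c0 : 0 <= c := hpsd y.
pose t := - b / (c + 1).
have h : 0 <= 2 * t * b + t ^+ 2 * c.
  have := hpsd (1 *: x + t *: y); rewrite Bf_comb hx -/b -/c.
  by rewrite expr1n mulr0 add0r mulr1.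
have hc1 : 0 < c + 1 by rewrite ltr_wpDl.
have h2 : 0 <= (c + 1) ^+ 2 * (2 * t * b + t ^+ 2 * c).
  by rewrite mulr_ge0 // exprn_ge0 // ltW.
have e : (c + 1) ^+ 2 * (2 * t * b + t ^+ 2 * c) = - (b ^+ 2 * (c + 2)).
  by rewrite /t; field; rewrite gt_eqF.
rewrite e oppr_ge0 in h2.
have : b ^+ 2 * (c + 2) == 0.
  by rewrite eq_le h2 mulr_ge0 // ?sqr_ge0 // addr_ge0.
by rewrite mulf_eq0 sqrf_eq0 => /orP [/eqP //|]; rewrite gt_eqF // ltr_wpDl.
Qed.

Lemma CS a b : 0 < B b b -> B a b ^+ 2 <= B a a * B b b.
Proof.
move=> hb.
pose t := - B a b / B b b.
have h : 0 <= B a a + 2 * t * B a b + t ^+ 2 * B b b.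
  have := hpsd (1 *: a + t *: b); rewrite Bf_comb.
  by rewrite expr1n mul1r mulr1.
rewrite -subr_ge0.
have e : B a a * B b b - B a b ^+ 2 =
   B b b * (B a a + 2 * t * B a b + t ^+ 2 * B b b).
  by rewrite /t; field; rewrite gt_eqF.
by rewrite e mulr_ge0 // ltW.
Qed.

End Alg.

Lemma cont_sum (R : realType) (T : topologicalType) (I : finType) (f : I -> T -> R) :
  (forall i, continuous (f i)) -> continuous (fun x => \sum_i f i x).
Proof.
move=> hf x.
have : forall s : seq I, {for x, continuous (fun y => \sum_(i <- s) f i y)}.
  elim=> [|i s IH].
    have -> : (fun y => \sum_(i <- [::]) f i y) = (fun=> 0).
      by apply: funext => y; rewrite big_nil.
    exact: cst_continuous.
  have -> : (fun y => \sum_(j <- i :: s) f j y) = (f i + (fun y => \sum_(j <- s) f j y)).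
    by apply: funext => y; rewrite big_cons.
  exact: continuousD (hf i x) IH.
exact.
Qed.

Lemma cont_mul (R : realType) (T : topologicalType) (f g : T -> R) :
  continuous f -> continuous g -> continuous (fun x => f x * g x).
Proof. by move=> hf hg x; exact: continuousM (hf x) (hg x). Qed.

Lemma cont_B (R : realType) n (Q : 'M[R]_n) :
  continuous (fun w : 'rV[R]_n => Bf Q w w).
Proof.
have -> : (fun w : 'rV[R]_n => Bf Q w w) =
  (fun w => \sum_k (\sum_i w 0 i * Q i k) * w 0 k).
  apply: funext => w; rewrite /Bf mxE; apply: eq_bigr => k _.
  by rewrite !mxE.
apply: cont_sum => k; apply: cont_mul; last exact: coord_continuous.
apply: cont_sum => i; apply: cont_mul; first exact: coord_continuous.
exact: cst_continuous.
Qed.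

Section Geo.
Variables (R : realType) (n : nat) (Om : set 'rV[R]_n) (u : 'rV[R]_n)
  (Q : 'M[R]_n).
Hypothesis hQs : Q^T = Q.
Hypothesis hpsd : forall x, 0 <= Bf Q x x.
Hypothesis hsd : pos_cone Om = [set y | forall x, pos_cone Om x -> 0 <= Bf Q x y].
Hypothesis hunit : unit_effect Om u.
Hypothesis hcomp : compact Om.
Hypothesis hne : exists w, Om w.
Hypothesis htrans : transitive_ss Om.
Hypothesis hinv : forall T, GLset Om T -> forall x, Bf Q (x *m T) (x *m T) = Bf Q x x.

Local Notation B := (Bf Q).
Local Notation rep := (rep Q).

Lemma Om_neq0 w : Om w -> w <> 0.
Proof. by move=> hw e; have := hunit hw; rewrite e ev0r => /eqP; rewrite eq_sym oner_eq0. Qed.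

Lemma Om_Bpos w : Om w -> 0 < B w w.
Proof.
move=> hw; rewrite lt_def hpsd andbT; apply/eqP => h.
exact: (Om_neq0 hw (definite hQs hpsd hsd hunit h)).
Qed.

Lemma maxnorm : exists al, (forall w, Om w -> B w w <= al) /\
  (forall w, extreme_point Om w -> B w w = al).
Proof.
have [c cOm hc] := EVT_max_rV hne hcomp (continuous_subspaceT (@cont_B _ _ Q)).
have hc' : forall t, Om t -> B t t <= B c c by move=> t ht; apply: hc; rewrite inE.
have cOm' : Om c by rewrite inE in cOm.
have cext : extreme_point Om c.
  split => // y z t hy hz /andP [t0 t1] ec.
  have hyz : y = z.
    apply/eqP; rewrite -subr_eq0; apply/eqP.
    apply: (definite hQs hpsd hsd hunit).
    apply/eqP; rewrite eq_le hpsd andbT.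
    have hy' := hc' _ hy; have hz' := hc' _ hz.
    have hcomb := Bf_comb hQs t (1 - t) y z.
    rewrite -ec in hcomb.
    have hd : B (y - z) (y - z) = B y y - 2 * B y z + B z z.
      rewrite !(BfDl hQs, BfDr, BfNl hQs, BfNr) (Bf_sym hQs z y); ring.
    rewrite hd.
    have ht : 0 < t * (1 - t) by rewrite mulr_gt0 // subr_gt0.
    rewrite -(pmulr_rle0 _ ht).
    have : t * (1 - t) * (B y y - 2 * B y z + B z z) =
      t * B y y + (1 - t) * B z z - B c c by rewrite hcomb; ring.
    move=> ->; rewrite subr_le0.
    have : t * B y y + (1 - t) * B z z <= t * B c c + (1 - t) * B c c.
      by rewrite lerD // ler_wpM2l // ?subr_ge0 // ltW.
    by move/le_trans; apply; rewrite -mulrDl subrKC mul1r.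
  by subst z; rewrite -scalerDl subrKC scale1r in ec; subst c.
exists (B c c); split => // w hw.
have [T [hT hTw]] := htrans cext hw.
by rewrite -hTw hinv.
Qed.

Lemma pi_key e : pure_effect Om e -> indecomposable Om e ->
  ev e (rep e) = ev u (rep e).
Proof.
move=> hp [he0 hind].
have heff : effects Om e := hp.1.
have he1 : forall w, Om w -> 0 <= ev e w by move=> w /heff /andP [].
have he2 : forall w, Om w -> ev e w <= 1 by move=> w /heff /andP [].
have [l [om [l0 [hom hy]]]] := rep_pc hQs hsd hunit he1.
have lpos : 0 < l.
  rewrite lt_def l0 andbT; apply/eqP => l00.
  by apply: he0; apply: (rep_eq0 hQs hsd hunit); rewrite hy l00 scale0r.
have hB : forall w, ev e w = l * B om w.
  by move=> w; rewrite -(Bf_rep hQs hsd hunit) hy (BfZl hQs).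
have omext : extreme_point Om om.
  split => // y z t hy' hz' /andP [t0 t1] ec.
  pose e1 := ((l * t) *: y) *m Q.
  pose e2 := ((l * (1 - t)) *: z) *m Q.
  have hrep1 : rep e1 = (l * t) *: y by rewrite /rep /e1 mulmxK // (Qunit hQs hsd hunit).
  have hrep2 : rep e2 = (l * (1 - t)) *: z by rewrite /rep /e2 mulmxK // (Qunit hQs hsd hunit).
  have e12 : e = e1 + e2.
    rewrite /e1 /e2 -mulmxDl -!scalerA -scalerDr -ec -hy.
    by rewrite (repK hQs hsd hunit).
  have ev1 : forall w, ev e1 w = B ((l * t) *: y) w by move=> w; rewrite BfE.
  have ev2 : forall w, ev e2 w = B ((l * (1 - t)) *: z) w by move=> w; rewrite BfE.
  have g1 : forall w, Om w -> 0 <= ev e1 w.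
    move=> w hw; rewrite ev1 (Bf_sym hQs); apply: (pc_B hsd) (Om_pc hw) _.
    by exists (l * t), y; split => //; rewrite mulr_ge0 // ltW.
  have g2 : forall w, Om w -> 0 <= ev e2 w.
    move=> w hw; rewrite ev2 (Bf_sym hQs); apply: (pc_B hsd) (Om_pc hw) _.
    by exists (l * (1 - t)), z; split => //; rewrite mulr_ge0 // subr_ge0 ltW.
  have E1 : effects Om e1.
    move=> w hw; rewrite g1 //=; apply: le_trans (he2 w hw).
    by rewrite e12 evDl lerDl g2.
  have E2 : effects Om e2.
    move=> w hw; rewrite g2 //=; apply: le_trans (he2 w hw).
    by rewrite e12 evDl lerDr g1.
  have [[c1 hc1] [c2 hc2]] := hind e1 e2 E1 E2 e12.
  have k1 : (l * t) *: y = (c1 * l) *: om.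
    by rewrite -hrep1 hc1 (repZ Q) hy scalerA.
  have k2 : (l * (1 - t)) *: z = (c2 * l) *: om.
    by rewrite -hrep2 hc2 (repZ Q) hy scalerA.
  have u1 := congr1 (ev u) k1; rewrite !(ev_u_pc hunit) // in u1.
  have u2 := congr1 (ev u) k2; rewrite !(ev_u_pc hunit) // in u2.
  split.
    by move: k1; rewrite -u1 => /scalerI; apply; rewrite mulf_neq0 // gt_eqF.
  move: k2; rewrite -u2 => /scalerI; apply.
  by rewrite mulf_neq0 // gt_eqF // subr_gt0.
have [al [hal1 hal2]] := maxnorm.
have homal : B om om = al := hal2 _ omext.
have alpos : 0 < al by rewrite -homal Om_Bpos.
have hmax : forall w, Om w -> ev e w <= l * al.
  move=> w hw; rewrite hB ler_wpM2l //.
  have := CS hQs hpsd om (Om_Bpos hw); rewrite homal => h.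
  have := hal1 w hw => h2.
  have h3 : B om w ^+ 2 <= al ^+ 2 by rewrite expr2; apply: le_trans h _; rewrite ler_wpM2l // ltW.
  nra.
set c := l * al.
have cpos : 0 < c by rewrite mulr_gt0.
have c1 : c = 1.
  apply/eqP; rewrite eq_le; apply/andP; split.
    by rewrite /c -homal -hB he2.
  rewrite leNgt; apply/negP => hc.
  pose e' := c^-1 *: e.
  have E' : effects Om e'.
    move=> w hw; rewrite /e' evZl; apply/andP; split.
      by rewrite mulr_ge0 ?he1 // invr_ge0 ltW.
    by rewrite -(ler_pM2l cpos) mulrA mulfV ?gt_eqF // mul1r mulr1 hmax.
  have E0 : effects Om 0 by move=> w hw; rewrite ev0l lexx ler01.
  have ee : e = c *: e' + (1 - c) *: 0.
    by rewrite scaler0 addr0 /e' scalerA mulfV ?scale1r // gt_eqF.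
  have := hp.2 e' 0 c E' E0; rewrite cpos hc => /(_ isT ee) [_ h0].
  by apply: he0; rewrite h0.
rewrite hy !evZr hunit // mulr1.
have : ev e om = c by rewrite hB homal.
by rewrite c1 => ->; rewrite mulr1.
Qed.

End Geo.

Lemma sum_ge_term (R : realType) (I : finType) (F : I -> R) j :
  (forall i, 0 <= F i) -> F j <= \sum_i F i.
Proof. by move=> h; rewrite (bigD1 j) //= lerDl sumr_ge0. Qed.

Section Main.
Variables (R : realType) (n : nat) (Om : set 'rV[R]_n) (u : 'rV[R]_n)
  (Q : 'M[R]_n).
Hypothesis hQs : Q^T = Q.
Hypothesis hpsd : forall x, 0 <= Bf Q x x.
Hypothesis hsd : pos_cone Om = [set y | forall x, pos_cone Om x -> 0 <= Bf Q x y].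
Hypothesis hunit : unit_effect Om u.
Hypothesis hcomp : compact Om.
Hypothesis hne : exists w, Om w.
Hypothesis htrans : transitive_ss Om.
Hypothesis hinv : forall T, GLset Om T -> forall x, Bf Q (x *m T) (x *m T) = Bf Q x x.

Local Notation B := (Bf Q).
Local Notation rep := (rep Q).

Lemma eff_ge0 e : effects Om e -> forall w, Om w -> 0 <= ev e w.
Proof. by move=> he w /he /andP []. Qed.
Lemma eff_le1 e : effects Om e -> forall w, Om w -> ev e w <= ev u w.
Proof. by move=> he w hw; rewrite hunit //; case/andP: (he w hw). Qed.

Lemma ideal_key (X : finType) (f : X -> 'rV[R]_n) :
  ideal_observable Om u f -> forall a, ev (f a) (rep (f a)) = ev u (rep (f a)).
Proof.
move=> [[hfe _] hdec] a.
have [k [es [hes hf]]] := hdec a.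
set s := \sum_(i < k) es i.
have ese : forall i, effects Om (es i) by move=> i; exact: (hes i).1.1.
have P1 : forall i, ev (es i) (rep (es i)) = ev u (rep (es i)).
  move=> i; exact: (pi_key hQs hpsd hsd hunit hcomp hne htrans hinv (hes i).1 (hes i).2).
have pci : forall i, pos_cone Om (rep (es i)).
  by move=> i; apply: (rep_pc hQs hsd hunit); exact: eff_ge0.
have P2 : forall i, ev (es i) (rep (es i)) <= ev s (rep (es i)).
  move=> i; rewrite /s ev_suml; apply: (sum_ge_term (F := fun j => ev (es j) (rep (es i)))).
  by move=> j; apply: pc_ge0 (pci i); exact: eff_ge0.
have hfa := hfe a.
case: hf => hfeq; rewrite hfeq; rewrite hfeq -/s in hfa.
  rewrite -/s (rep_sum Q) !ev_sumr; apply: eq_bigr => i _.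
  apply/eqP; rewrite eq_le; apply/andP; split.
    by apply: pc_le (pci i) => w hw; apply: eff_le1.
  by rewrite -P1 P2.
rewrite -/s evBl; suff -> : ev s (rep (u - s)) = 0 by rewrite subr0.
rewrite (ev_rep_sym hQs hsd hunit) /s (rep_sum Q) ev_sumr; apply: big1 => i _.
apply/eqP; rewrite eq_le; apply/andP; split.
  by rewrite evBl subr_le0 -P1 P2.
by apply: pc_ge0 (pci i); apply: eff_ge0.
Qed.

Lemma Dinf_ge (X : finType) (ft f : X -> 'rV[R]_n) :
  (forall a, effects Om (ft a)) -> (forall a, effects Om (f a)) ->
  forall w, Om w -> forall a, ev (f a) w - ev (ft a) w <= Dinf Om ft f.
Proof.
move=> hft hf w hw a.
have hb : forall w, Om w -> forall a, `|ev (ft a) w - ev (f a) w| <= 1.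
  move=> w' hw' a'; have /andP [h1 h2] := hft a' w' hw'.
  have /andP [h3 h4] := hf a' w' hw'.
  by rewrite ler_norml; apply/andP; split; lra.
apply: (le_trans (y := `|ev (ft a) w - ev (f a) w|)).
  by rewrite distrC ler_norm.
apply: (le_trans (y := \big[Num.max/0]_(a : X) `|ev (ft a) w - ev (f a) w|)).
  exact: le_bigmax.
apply: ub_le_sup; last by exists w.
exists 1 => r [w' [hw' ->]].
by apply: bigmax_le => // a' _; apply: hb.
Qed.

Lemma sum_pair (A B : finType) (F : (A * B)%type -> R) :
  \sum_p F p = \sum_a \sum_b F (a, b).
Proof. by rewrite pair_bigA; apply: eq_bigr => -[a b] _. Qed.

Lemma LE_le (X : finType) (f : X -> 'rV[R]_n) w a : LE f w <= 1 - ev (f a) w.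
Proof. by rewrite /LE lerB // le_bigmax. Qed.

Lemma marg1_eff (A B : finType) (M : (A * B)%type -> 'rV[R]_n) :
  observable Om u M -> forall a, effects Om (marginal1 M a).
Proof.
move=> [hM [hs _]] a w hw; rewrite /marginal1 ev_suml.
apply/andP; split; first by apply: sumr_ge0 => b _; apply: eff_ge0.
rewrite -(hunit hw) -hs ev_suml sum_pair.
apply: (sum_ge_term (F := fun a => \sum_b ev (M (a, b)) w)) => a'.
by apply: sumr_ge0 => b _; apply: eff_ge0.
Qed.

Lemma marg2_eff (A B : finType) (M : (A * B)%type -> 'rV[R]_n) :
  observable Om u M -> forall b, effects Om (marginal2 M b).
Proof.
move=> [hM [hs _]] b w hw; rewrite /marginal2 ev_suml.
apply/andP; split; first by apply: sumr_ge0 => a _; apply: eff_ge0.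
rewrite -(hunit hw) -hs ev_suml sum_pair.
rewrite [leRHS]exchange_big /=.
apply: (sum_ge_term (F := fun b => \sum_a ev (M (a, b)) w)) => b'.
by apply: sumr_ge0 => a _; apply: eff_ge0.
Qed.


Theorem partII (A B : finType) (F : A -> 'rV[R]_n) (G : B -> 'rV[R]_n)
  (M : (A * B)%type -> 'rV[R]_n) :
  ideal_observable Om u F -> ideal_observable Om u G -> observable Om u M ->
  exists w, Om w /\
    LE F w + LE G w <= Dinf Om (marginal1 M) F + Dinf Om (marginal2 M) G.
Proof.
move=> hF hG hM.
set DF := Dinf Om (marginal1 M) F; set DG := Dinf Om (marginal2 M) G.
have Fe : forall a, effects Om (F a) := hF.1.1.
have Ge : forall b, effects Om (G b) := hG.1.1.
have hFs : \sum_a F a = u := hF.1.2.1.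
have hGs : \sum_b G b = u := hG.1.2.1.
have Me : forall p, effects Om (M p) := hM.1.
have hMs : \sum_p M p = u := hM.2.1.
have MFe := marg1_eff hM; have MGe := marg2_eff hM.
set z := fun p => rep (M p).
set U := ev u (rep u).
have hu0 : forall w, Om w -> 0 <= ev u w by move=> w hw; rewrite hunit.
have Upos : 0 < U.
  have [l [w [l0 [hw hy]]]] := rep_pc hQs hsd hunit hu0.
  rewrite /U hy (ev_u_pc hunit) // lt_def l0 andbT; apply/eqP => l00.
  have : u = 0 by apply: (rep_eq0 hQs hsd hunit); rewrite hy l00 scale0r.
  by move=> u0; have := hunit hw; rewrite u0 ev0l => /eqP; rewrite eq_sym oner_eq0.
have hFa : forall a, ev u (rep (F a)) - ev (marginal1 M a) (rep (F a))
    <= DF * ev u (rep (F a)).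
  move=> a; rewrite -{1}(ideal_key hF a).
  have [l [w [l0 [hw ->]]]] := rep_pc hQs hsd hunit (eff_ge0 (Fe a)).
  rewrite !evZr (hunit hw) mulr1 -mulrBr mulrC ler_wpM2r //.
  exact: (Dinf_ge MFe Fe hw a).
have hGb : forall b, ev u (rep (G b)) - ev (marginal2 M b) (rep (G b))
    <= DG * ev u (rep (G b)).
  move=> b; rewrite -{1}(ideal_key hG b).
  have [l [w [l0 [hw ->]]]] := rep_pc hQs hsd hunit (eff_ge0 (Ge b)).
  rewrite !evZr (hunit hw) mulr1 -mulrBr mulrC ler_wpM2r //.
  exact: (Dinf_ge MGe Ge hw b).
have SF : U - \sum_p ev (F p.1) (z p) <= DF * U.
  have h := @ler_sum _ _ (index_enum A) xpredT _ _ (fun a _ => hFa a).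
  rewrite sumrB -mulr_sumr in h.
  have e1 : \sum_a ev u (rep (F a)) = U by rewrite -ev_sumr -rep_sum hFs.
  have e2 : \sum_a ev (marginal1 M a) (rep (F a)) = \sum_p ev (F p.1) (z p).
    rewrite sum_pair; apply: eq_bigr => a _. rewrite /marginal1 ev_suml.
    by apply: eq_bigr => b _; rewrite (ev_rep_sym hQs hsd hunit).
  by rewrite e1 e2 in h.
have SG : U - \sum_p ev (G p.2) (z p) <= DG * U.
  have h := @ler_sum _ _ (index_enum B) xpredT _ _ (fun b _ => hGb b).
  rewrite sumrB -mulr_sumr in h.
  have e1 : \sum_b ev u (rep (G b)) = U by rewrite -ev_sumr -rep_sum hGs.
  have e2 : \sum_b ev (marginal2 M b) (rep (G b)) = \sum_p ev (G p.2) (z p).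
    rewrite sum_pair [RHS]exchange_big; apply: eq_bigr => b _; rewrite /marginal2 ev_suml.
    by apply: eq_bigr => a _; rewrite (ev_rep_sym hQs hsd hunit).
  by rewrite e1 e2 in h.
have hU : U = \sum_p ev u (z p).
  have -> : U = ev u (rep (\sum_p M p)) by rewrite hMs.
  by rewrite rep_sum ev_sumr.
apply: contrapT => hno.
pose T p := 2 * ev u (z p) - ev (F p.1) (z p) - ev (G p.2) (z p) - (DF + DG) * ev u (z p).
have hT : forall p, 0 <= T p /\ (T p = 0 -> ev u (z p) = 0).
  move=> [a b].
  have [l [w [l0 [hw hz]]]] := rep_pc hQs hsd hunit (eff_ge0 (Me (a, b))).
  have K : 0 < 2 - ev (F a) w - ev (G b) w - (DF + DG).
    rewrite ltNge; apply/negP => hK; apply: hno; exists w; split => //.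
    have := LE_le F w a; have := LE_le G w b; lra.
  have eT : T (a, b) = l * (2 - ev (F a) w - ev (G b) w - (DF + DG)).
    by rewrite /T /z /= hz !evZr (hunit hw); ring.
  rewrite eT; split; first by rewrite mulr_ge0 // ltW.
  move/eqP; rewrite mulf_eq0 (gt_eqF K) orbF => /eqP l00.
  by rewrite /z /= hz (ev_u_pc hunit) //.
have ST : \sum_p T p <= 0.
  rewrite /T !sumrB -!mulr_sumr -hU.
  have := SF; have := SG; lra.
have ST0 : \sum_p T p = 0.
  by apply/eqP; rewrite eq_le ST sumr_ge0 // => p _; case: (hT p).
have : U = 0.
  rewrite hU; apply: big1 => p _; apply: (hT p).2.
  exact: (psumr_eq0P (fun p _ => (hT p).1) ST0).
by move=> U0; move: Upos; rewrite U0 ltxx.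
Qed.
End Main.

Section Ana.
Variable R : realType.

Lemma mx_cont (T : topologicalType) p q (f : T -> 'M[R]_(p, q)) :
  (forall i j, continuous (fun x => f x i j)) -> continuous f.
Proof.
move=> hf x A hA.
case: hA => P hP sPA.
have : \forall y \near x, forall ij : 'I_p * 'I_q, P ij.1 ij.2 (f y ij.1 ij.2).
  apply: filter_forall => -[i j] /=; exact: hf i j x _ (hP i j).
by apply: filterS => y hy; apply: sPA => i j; exact: (hy (i, j)).
Qed.

Lemma mx_entry_le p q (M : 'M[R]_(p, q)) i j : `|M i j| <= `|M|.
Proof.
by rewrite [leRHS]/Num.norm /= mx_normrE; apply/bigmax_geP; right => /=; exists (i, j).
Qed.

Lemma mx_norm_le p q (M : 'M[R]_(p, q)) c : 0 <= c ->
  (forall i j, `|M i j| <= c) -> `|M| <= c.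
Proof.
move=> c0 h; rewrite [leLHS]/Num.norm /= mx_normrE.
by apply: bigmax_le => // -[i j] _; exact: h.
Qed.


Lemma cont_comp_entry (T : topologicalType) p q (f : T -> 'M[R]_(p, q)) i j :
  continuous f -> continuous (fun x => f x i j).
Proof.
move=> hf x; exact: (continuous_comp (hf x) (@coord_continuous _ _ _ i j (f x))).
Qed.

Lemma cont_mulmx (T : topologicalType) p q r (f : T -> 'M[R]_(p, q))
  (g : T -> 'M[R]_(q, r)) :
  continuous f -> continuous g -> continuous (fun x => f x *m g x).
Proof.
move=> hf hg; apply: mx_cont => i j.
have -> : (fun x => (f x *m g x) i j) = (fun x => \sum_k f x i k * g x k j).
  by apply: funext => x; rewrite mxE.
apply: cont_sum => k; apply: cont_mul; exact: cont_comp_entry.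
Qed.

Lemma cont_id_mx p q : continuous (fun x : 'M[R]_(p, q) => x).
Proof. by move=> x. Qed.

Lemma cont_cst_mx (T : topologicalType) p q (A : 'M[R]_(p, q)) :
  continuous (fun _ : T => A).
Proof. exact: cst_continuous. Qed.

End Ana.

Section Ana2.
Variables (R : realType) (n : nat) (Om : set 'rV[R]_n).
Hypothesis hcomp : compact Om.

Lemma Om_closed : closed Om.
Proof. exact: (compact_closed (@norm_hausdorff _ _) hcomp). Qed.

Lemma Om_bound : exists Mb, 0 <= Mb /\ forall w, Om w -> `|w| <= Mb.
Proof.
have [M0 [_ hM]] := compact_bounded hcomp.
exists (`|M0| + 1); split; first by rewrite addr_ge0.
move=> w hw; apply: (hM (`|M0| + 1)) => //.
by have := ler_norm M0; lra.
Qed.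

Definition K1 := [set T : 'M[R]_n | forall w, Om w -> Om (w *m T)].
Definition K2 := [set T : 'M[R]_n | forall w, Om w -> exists v, Om v /\ v *m T = w].

Lemma K1_closed : closed K1.
Proof.
have -> : K1 = \bigcap_(w in Om) ((fun T => w *m T) @^-1` Om).
  by apply/seteqP; split => T /= h w hw; exact: h.
apply: closed_bigI => w hw; apply: closed_comp; last exact: Om_closed.
move=> T _; apply: cont_mulmx; [exact: cont_cst_mx | exact: cont_id_mx].
Qed.

Lemma K1_bound : spans Om -> exists C, forall T, K1 T -> forall i j, `|T i j| <= C.
Proof.
move=> hspan; have [Mb [Mb0 hMb]] := Om_bound.
have h : forall i : 'I_n, exists C : R, forall T, K1 T -> forall j, `|T i j| <= C.
  move=> i; have [k [p [c [hp hv]]]] := hspan ('e_i).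
  exists (\sum_(l < k) `|c l| * Mb) => T hT j.
  have -> : T i j = (('e_i : 'rV[R]_n) *m T) 0 j by rewrite -rowE mxE.
  rewrite hv mulmx_suml summxE; apply: le_trans (ler_norm_sum _ _ _) _.
  apply: ler_sum => l _; rewrite -scalemxAl mxE normrM ler_wpM2l //.
  apply: le_trans (mx_entry_le _ 0 j) _; apply: hMb; exact: hT.
have [Cf hCf] := fin_all_exists h.
exists (\sum_i `|Cf i|) => T hT i j; apply: le_trans (hCf i T hT j) _.
apply: le_trans (ler_norm _) _.
exact: (sum_ge_term (F := fun i => `|Cf i|)).
Qed.

Lemma GL_char : spans Om -> GLset Om = K1 `&` K2.
Proof.
move=> hspan; apply/seteqP; split => T.
  move=> [_ himg]; split.
    by move=> w hw; rewrite -himg; exists w.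
  move=> w hw; have : ((fun w => w *m T) @` Om) w by rewrite himg.
  by move=> [v hv e]; exists v.
move=> [h1 h2]; split.
  rewrite -row_full_unit; apply/row_fullP.
  have hx : forall i : 'I_n, exists x : 'rV[R]_n, x *m T = 'e_i.
    move=> i; have [k [p [c [hp hv]]]] := hspan ('e_i).
    have hq : forall l : 'I_k, exists v, Om v /\ v *m T = p l.
      by move=> l; apply: h2.
    have [vs hvs] := fin_all_exists hq.
    exists (\sum_l c l *: vs l); rewrite mulmx_suml hv; apply: eq_bigr => l _.
    by rewrite -scalemxAl (hvs l).2.
  have [xs hxs] := fin_all_exists hx.
  exists (\matrix_i xs i); apply/row_matrixP => i.
  by rewrite row_mul rowK hxs row1.
apply/seteqP; split => w.
  by move=> [v hv <-]; exact: h1.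
by move=> hw; have [v [hv e]] := h2 w hw; exists v.
Qed.


Lemma rv_mul_norm (v : 'rV[R]_n) (D : 'M[R]_n) : `|v *m D| <= n%:R * `|v| * `|D|.
Proof.
apply: mx_norm_le; first by rewrite !mulr_ge0.
move=> i j; rewrite mxE; apply: le_trans (ler_norm_sum _ _ _) _.
apply: (le_trans (y := \sum_(k < n) `|v| * `|D|)).
  apply: ler_sum => k _; rewrite normrM; apply: ler_pM => //; exact: mx_entry_le.
by rewrite sumr_const card_ord -mulrA mulr_natl.
Qed.

Lemma K2_closed : closed K2.
Proof.
move=> T hT w hw; apply: contrapT => hno.
set Im := [set v *m T | v in Om].
have cIm : compact Im.
  apply: continuous_compact hcomp; apply: continuous_subspaceT.
  by apply: cont_mulmx; [exact: cont_id_mx | exact: cont_cst_mx].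
have clIm := compact_closed (@norm_hausdorff _ _) cIm.
have wn : ~ Im w by move=> [v hv e]; apply: hno; exists v.
have nb : nbhs w (~` Im) by apply: open_nbhs_nbhs; split => //; exact: closed_openC.
have [e e0 he] := (nbhs_ballP _ _).1 nb.
have [Mb [Mb0 hMb]] := Om_bound.
set d := e / (n%:R * Mb + 1).
have hd1 : 0 < n%:R * Mb + 1 by rewrite ltr_wpDl // mulr_ge0.
have d0 : 0 < d by rewrite divr_gt0.
have [T' [hT' hb]] := hT _ (nbhsx_ballx T d d0).
have [v [hv hvw]] := hT' w hw.
apply: (he (v *m T)); last by exists v.
rewrite -ball_normE /ball_ /= -hvw -mulmxBr.
apply: le_lt_trans (rv_mul_norm _ _) _.
have hD : `|T' - T| < d by move: hb; rewrite -ball_normE /ball_ /= distrC.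
apply: (le_lt_trans (y := n%:R * Mb * d)).
  apply: ler_pM; [by rewrite mulr_ge0 | by [] | by rewrite ler_wpM2l // hMb | exact: ltW].
rewrite /d mulrA ltr_pdivrMr //.
by rewrite mulrDr mulr1 [e * _]mulrC ltrDl.
Qed.

Lemma GL_closed : spans Om -> closed (GLset Om).
Proof. by move=> hs; rewrite GL_char //; apply: closedI; [exact: K1_closed | exact: K2_closed]. Qed.

End Ana2.


Section Meas.
Variables (R : realType) (n : nat).

Lemma closed_meas (D : set 'M[R]_n) : closed D -> measurable (D : set (Mx R n)).
Proof.
move=> hD; rewrite -(setCK D); apply: measurableC; apply: sub_sigma_algebra.
exact: closed_openC.
Qed.

Lemma meas_cont (f : 'M[R]_n -> R) : continuous f ->
  measurable_fun setT (f : Mx R n -> R).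
Proof.
move=> hf; apply: (measurability _ (RGenOpens.measurableE R)).
move=> _ [_ [a [b ->] <-]]; rewrite setTI; apply: sub_sigma_algebra.
by move/continuousP : hf; apply; exact: interval_open.
Qed.

Lemma meas_mul (S : 'M[R]_n) :
  measurable_fun setT ((fun T : 'M[R]_n => S *m T) : Mx R n -> Mx R n).
Proof.
have hc : continuous (fun T : 'M[R]_n => S *m T).
  by apply: cont_mulmx; [exact: cont_cst_mx | exact: cont_id_mx].
apply: (@measurability _ _ (Mx R n) (Mx R n) _ _ (@open 'M[R]_n)) => //.
move=> _ [A hA <-]; rewrite setTI; apply: sub_sigma_algebra.
by move/continuousP : hc; apply.
Qed.


Variables (Om : set 'rV[R]_n) (mu : probability (Mx R n) R).
Hypothesis hcomp : compact Om.
Hypothesis hspan : spans Om.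
Hypothesis hhaar : haar_GL Om mu.

Lemma muK1 : mu (~` (K1 Om : set (Mx R n))) = 0%E.
Proof.
have mG : measurable (GLset Om : set (Mx R n)) by apply: closed_meas; exact: GL_closed.
have mK : measurable (K1 Om : set (Mx R n)) by apply: closed_meas; exact: K1_closed.
have sub : (GLset Om : set (Mx R n)) `<=` K1 Om by rewrite GL_char // => T [].
have h1 : mu (K1 Om : set (Mx R n)) = 1%E.
  apply/eqP; rewrite eq_le probability_le1 //= -hhaar.1.
  by apply: le_measure => //; rewrite inE.
by rewrite probability_setC // h1 subee.
Qed.

Lemma int_cont (f : 'M[R]_n -> R) C : continuous f ->
  (forall T, K1 Om T -> `|f T| <= C) ->
  mu.-integrable (setT : set (Mx R n)) (EFin \o f).
Proof.
move=> hf hb; apply/integrableP; split.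
  by apply/measurable_EFinP; exact: meas_cont.
apply: (le_lt_trans (integral_le_bound (`|C|%:E) _ _ _ _)) => //.
- by apply/measurable_EFinP; exact: meas_cont.
- exists (~` (K1 Om : set (Mx R n))); split => //.
    by apply: measurableC; apply: closed_meas; exact: K1_closed.
    exact: muK1.
  move=> T /= hT hK; apply: hT => _; rewrite lee_fin.
  by apply: le_trans (hb T hK) _; exact: ler_norm.
have h1 : mu [set: Mx R n] = 1%E := probability_setT mu.
apply: lte_mul_pinfty => //; apply: (le_lt_trans (probability_le1 mu measurableT)); exact: ltry.
Qed.

Lemma Rint_sum (I : finType) (f : I -> Mx R n -> R) :
  (forall i, mu.-integrable setT (EFin \o f i)) ->
  Rintegral mu setT (fun x => \sum_i f i x) = \sum_i Rintegral mu setT (f i).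
Proof.
move=> hf.
suff : forall s : seq I, mu.-integrable setT (EFin \o (fun x => \sum_(i <- s) f i x)) /\
  Rintegral mu setT (fun x => \sum_(i <- s) f i x) = \sum_(i <- s) Rintegral mu setT (f i).
  by move=> /(_ (index_enum I)) [].
elim=> [|i s [IH1 IH2]].
  split.
    apply: (@eq_integrable _ _ _ mu setT measurableT (cst 0%E)).
      by move=> x _; rewrite /= big_nil.
    exact: integrable0.
  rewrite big_nil (@eq_Rintegral _ _ _ mu setT (fun _ => 0)); first by rewrite Rintegral_cst // mul0r.
  by move=> x _; rewrite big_nil.
split.
  apply: (@eq_integrable _ _ _ mu setT measurableT ((EFin \o f i) \+ (EFin \o (fun x => \sum_(i <- s) f i x)))).
    by move=> x _; rewrite /= big_cons.
  exact: integrableD.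
rewrite big_cons (@eq_Rintegral _ _ _ mu setT (fun x => f i x + \sum_(j <- s) f j x)).
  by rewrite RintegralD // IH2.
by move=> x _; rewrite big_cons.
Qed.


Definition phi (i j : 'I_n) (T : 'M[R]_n) : R := (T *m T^T) i j.

Lemma cont_tr : continuous (fun T : 'M[R]_n => T^T).
Proof.
apply: mx_cont => i j.
have -> : (fun x : 'M[R]_n => x^T i j) = (fun x => x j i) by apply: funext => x; rewrite mxE.
exact: coord_continuous.
Qed.

Lemma cont_phi i j : continuous (phi i j).
Proof.
apply: cont_comp_entry; apply: cont_mulmx; [exact: cont_id_mx | exact: cont_tr].
Qed.

Lemma int_phi i j : mu.-integrable (setT : set (Mx R n)) (EFin \o phi i j).
Proof.
have [C hC] := K1_bound hcomp hspan.
apply: (int_cont (C := n%:R * (C * C))); first exact: cont_phi.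
move=> T hT; rewrite /phi mxE; apply: le_trans (ler_norm_sum _ _ _) _.
apply: (le_trans (y := \sum_(k < n) C * C)).
  apply: ler_sum => k _; rewrite mxE normrM; apply: ler_pM => //; exact: hC.
by rewrite sumr_const card_ord mulr_natl.
Qed.

Definition Qm : 'M[R]_n := \matrix_(i, j) Rintegral mu setT (phi i j).

Lemma bilin_expand (M : 'M[R]_n) (x y : 'rV[R]_n) :
  (x *m M *m y^T) 0 0 = \sum_(p : 'I_n * 'I_n) x 0 p.1 * M p.1 p.2 * y 0 p.2.
Proof.
rewrite mxE (eq_bigr (fun j => \sum_i x 0 i * M i j * y 0 j)); last first.
  by move=> j _; rewrite !mxE mulr_suml.
rewrite exchange_big pair_bigA /=; apply: eq_bigr => -[i j] _ //.
Qed.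

Lemma dot_expand (x y : 'rV[R]_n) (T : 'M[R]_n) :
  dotE (x *m T) (y *m T) = (x *m (T *m T^T) *m y^T) 0 0.
Proof. by rewrite -[dotE _ _]/(ev _ _) evE trmx_mul !mulmxA. Qed.

Lemma ipGL_eq x y : ipGL mu x y = Bf Qm x y.
Proof.
rewrite /ipGL /Bf bilin_expand.
rewrite (@eq_Rintegral _ _ _ mu setT
  (fun T => \sum_(p : 'I_n * 'I_n) (x 0 p.1 * y 0 p.2) * phi p.1 p.2 T)); last first.
  move=> T _; rewrite dot_expand bilin_expand; apply: eq_bigr => p _.
  by rewrite /phi; ring.
rewrite Rint_sum; last first.
  move=> p; have h := integrableZl measurableT (x 0 p.1 * y 0 p.2) (int_phi p.1 p.2).
  move: h; apply: eq_integrable => //.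
apply: eq_bigr => p _; rewrite RintegralZl //; last exact: int_phi.
by rewrite mxE; ring.
Qed.

Lemma Qm_sym : Qm^T = Qm.
Proof.
apply/matrixP => i j; rewrite !mxE; apply: eq_Rintegral => T _.
by rewrite /phi !mxE; apply: eq_bigr => k _; rewrite !mxE mulrC.
Qed.

Lemma Qm_psd x : 0 <= Bf Qm x x.
Proof.
rewrite -ipGL_eq; apply: Rintegral_ge0 => T _.
by rewrite /dotE; apply: sumr_ge0 => i _; rewrite -expr2 sqr_ge0.
Qed.

Lemma Qm_inv S : GLset Om S -> forall x, Bf Qm (x *m S) (x *m S) = Bf Qm x x.
Proof.
move=> hS x; rewrite -!ipGL_eq /ipGL.
pose g := fun T : 'M[R]_n => dotE (x *m T) (x *m T).
have hg : continuous g.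
  move=> T; rewrite /g.
  have -> : (fun T : 'M[R]_n => dotE (x *m T) (x *m T)) =
    (fun T => \sum_(i < n) (x *m T) 0 i * (x *m T) 0 i) by [].
  apply: cont_sum => i; apply: cont_mul; apply: cont_comp_entry;
    (apply: cont_mulmx; [exact: cont_cst_mx | exact: cont_id_mx]).
have g0 : forall T, 0 <= g T.
  by move=> T; rewrite /g /dotE; apply: sumr_ge0 => i _; rewrite -expr2 sqr_ge0.
rewrite (@eq_Rintegral _ _ _ mu setT (fun T => g (S *m T))); last first.
  by move=> T _; rewrite /g !mulmxA.
rewrite /Rintegral; congr fine.
have mphi := @meas_mul S.
have mg : measurable_fun setT (EFin \o g : Mx R n -> \bar R).
  by apply/measurable_EFinP; exact: meas_cont.
have g0' : {in setT, forall y : Mx R n, (0 <= (EFin \o g) y)%E}.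
  by move=> y _; rewrite /= lee_fin g0.
have := ge0_integral_pushforward mphi mu measurableT mg g0'.
rewrite preimage_setT => <-.
apply: eq_measure_integral => A mA _.
by rewrite /pushforward; exact: hhaar.2 S hS A mA.
Qed.

End Meas.

Theorem theorem3p2 (R : realType) (N : nat) (Om : set 'rV[R]_N.+1)
  (u : 'rV[R]_N.+1) (mu : probability (Mx R N.+1) R)
  (A B : finType) (F : A -> 'rV[R]_N.+1) (G : B -> 'rV[R]_N.+1)
  (M : (A * B)%type -> 'rV[R]_N.+1) :
  state_space Om -> unit_effect Om u -> haar_GL Om mu ->
  transitive_ss Om -> self_dual Om mu ->
  ideal_observable Om u F -> ideal_observable Om u G ->
  observable Om u M ->
  exists w, Om w /\
    LE F w + LE G w <= Dinf Om (marginal1 M) F + Dinf Om (marginal2 M) G.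
Proof.
move=> [hcomp [hcvx [hspan hnaff]]] hunit hhaar htrans hsd hF hG hM.
have hip := ipGL_eq hcomp hspan hhaar.
have hsd' : pos_cone Om =
    [set y | forall x, pos_cone Om x -> 0 <= Bf (Qm mu) x y].
  rewrite {1}hsd; apply/seteqP; split => y /= h x hx.
    by rewrite -hip; exact: h.
  by rewrite hip; exact: h.
have hne : exists w, Om w.
  have [k [p [c [hp hv]]]] := hspan (const_mx 1).
  case: k p c hp hv => [|k] p c hp hv.
    rewrite big_ord0 in hv; have := congr1 (fun M : 'rV[R]_N.+1 => M 0 0) hv.
    by rewrite !mxE => /eqP; rewrite oner_eq0.
  by exists (p ord0).
exact: (partII (@Qm_sym _ _ mu) (@Qm_psd _ _ Om mu hcomp hspan hhaar) hsd' hunit hcomp hne htrans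
  (@Qm_inv _ _ Om mu hcomp hspan hhaar) hF hG hM).
Qed.
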